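(* Let $\alpha\in[0,\infty)^n$ be non-increasing and let $f\colon\mathcal{B}_n\to\mathcal{H}_d$ satisfy $\|f(x)-f(y)\|\le d_\alpha(x,y)$ for all $x,y$. Let $X$ be a $k$-homogeneous $\mathcal{B}_n$-valued random vector satisfying the stochastic covering property. Define random variables $Y_1,\dots,Y_k$ by: conditionally on $X$, $Y_1$ is uniform on $\mathrm{supp}\,X\setminus\{1,\dots,k\}$, and for $l=2,\dots,k$, conditionally on $X,Y_1,\dots,Y_{l-1}$, $Y_l$ is uniform on $\mathrm{supp}\,X\setminus(\{1,\dots,k\}\cup\{Y_1,\dots,Y_{l-1}\})$, where $\mathrm{supp}\,X=\{i:X_i=1\}$ and the uniform distribution on the empty set is the Dirac mass at $0$. Let $\mathcal{G}_0$ be trivial, $\mathcal{G}_l=\sigma(X_1,\dots,X_l)$ for $l\in[k]$ and $\mathcal{G}_{k+r}=\sigma(X_1,\dots,X_k,Y_1,\dots,Y_r)$ for $r\in[k]$, and $N_l=\mathbb{E}[f(X)\mid\mathcal{G}_l]-\mathbb{E}[f(X)\mid\mathcal{G}_{l-1}]$ for $l\in[2k]$. Then $N_l^2\preccurlyeq4\alpha_l^2I_d$ for $l\in[k]$, and $N_l^2\preccurlyeq4\alpha_k^2I_d$ for $l=k+1,\dots,2k$.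
   Context: $\mathcal{B}_n=\{0,1\}^n$, $\mathcal{H}_d$ the $d\times d$ Hermitian matrices, $\|\cdot\|$ operator norm, $\preccurlyeq$ positive semidefinite order, $I_d$ identity. $d_\alpha(x,y)=\sum_i\alpha_i\mathbf{1}\{x_i\ne y_i\}$. $X$ is $k$-homogeneous if a.s. exactly $k$ of its coordinates equal $1$. For $S\subset[n]$, $x_S=(x_i)_{i\in S}$; $x\triangleright y$ means $x=y$ or $x=y+e_i$. $X$ satisfies the stochastic covering property if for every $S\subset[n]$ and $x,y$ with $x_S\triangleright y_S$ there is a coupling $(U,V)$ of $\mathcal{L}(X_{S^c}\mid X_S=y_S)$ and $\mathcal{L}(X_{S^c}\mid X_S=x_S)$ with $U\triangleright V$ a.s. *)

(* Defs.v *)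
From HB Require Import structures.
From mathcomp Require Import all_boot all_order all_algebra.
From mathcomp Require Import complex.
From mathcomp Require Import reals.
Set Implicit Arguments. Unset Strict Implicit. Unset Printing Implicit Defensive.
Import Order.TTheory GRing.Theory Num.Theory.
Local Open Scope ring_scope.
Local Open Scope complex_scope.

Section Defs.
Variable R : realType.
Local Notation C := R[i].

Definition ctrans m p (A : 'M[C]_(m, p)) : 'M[C]_(p, m) := (map_mx (@Num.conj C) A)^T.
Definition hermitian_mx d (A : 'M[C]_d) : Prop := ctrans A = A.
Definition vnorm d (v : 'cV[C]_d) : R := Num.sqrt (\sum_i (@complex.Re R (v i 0) ^+ 2 + @complex.Im R (v i 0) ^+ 2)).
Definition opnorm d (A : 'M[C]_d) : R :=
  sup (fun r : R => exists v : 'cV[C]_d, vnorm v <= 1 /\ r = vnorm (A *m v)).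
Definition psd d (A : 'M[C]_d) : Prop :=
  forall v : 'cV[C]_d, 0 <= (ctrans v *m A *m v) 0 0.
Definition loewner d (A B : 'M[C]_d) : Prop := psd (B - A).

Definition cube n := {ffun 'I_n -> bool}.
Definition dalpha n (alpha : 'I_n -> R) (x y : cube n) : R :=
  \sum_i alpha i * (x i != y i)%:R.
Definition supp n (x : cube n) : {set 'I_n} := [set i | x i].

Definition agree n (T : {set 'I_n}) (x y : cube n) : bool :=
  [forall i in T, x i == y i].
Definition tri n (T : {set 'I_n}) (x y : cube n) : bool :=
  agree T x y ||
  [exists i in T, [&& x i, ~~ y i & [forall j in T, (j != i) ==> (x j == y j)]]].

Definition is_distr n (p : cube n -> R) : Prop :=
  (forall x, 0 <= p x) /\ \sum_x p x = 1.
Definition homogeneous n (k : nat) (p : cube n -> R) : Prop :=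
  forall x, 0 < p x -> #|supp x| = k.
Definition PS n (p : cube n -> R) (S : {set 'I_n}) (a : cube n) : R :=
  \sum_(x | agree S x a) p x.
Definition condlaw n (p : cube n -> R) (S : {set 'I_n}) (a u : cube n) : R :=
  if agree S u a then p u / PS p S a else 0.
Definition SCP n (p : cube n -> R) : Prop :=
  forall (S : {set 'I_n}) (a b : cube n), tri S a b ->
    0 < PS p S a -> 0 < PS p S b ->
    exists q : {ffun (cube n * cube n) -> R},
      [/\ forall uv, 0 <= q uv,
          forall u, \sum_v q (u, v) = condlaw p S b u,
          forall v, \sum_u q (u, v) = condlaw p S a v &
          forall uv, 0 < q uv -> tri (~: S) uv.1 uv.2].

(* ---------- joint law of (X, Y_1, ..., Y_k) ----------
   Y_l is encoded as an option 'I_n : Some i = coordinate i, None = the value 0.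
   Coordinates are 0-based, so the paper's {1,...,k} is {i | i < k}. *)
Definition Omega n k := (cube n * {ffun 'I_k -> option 'I_n})%type.
Definition avail n k (x : cube n) (y : {ffun 'I_k -> option 'I_n}) (l : 'I_k)
  : {set 'I_n} :=
  [set i | [&& x i, (k <= i)%N & [forall j : 'I_k, (j < l)%N ==> (y j != Some i)]]].
Definition unif n (S : {set 'I_n}) (o : option 'I_n) : R :=
  if S == set0 then (o == None)%:R
  else match o with Some i => (i \in S)%:R / #|S|%:R | None => 0 end.
Definition weight n k (p : cube n -> R) (w : Omega n k) : R :=
  p w.1 * \prod_(l : 'I_k) unif (avail w.1 w.2 l) (w.2 l).

(* w and w' are indistinguishable by G_l *)
Definition sameG n k (l : nat) (w w' : Omega n k) : bool :=
  [forall i : 'I_n, (i < minn l k)%N ==> (w.1 i == w'.1 i)] &&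
  [forall j : 'I_k, (j < l - k)%N ==> (w.2 j == w'.2 j)].
(* E[f(X) | G_l] evaluated at outcome w *)
Definition cexp n k d (p : cube n -> R) (f : cube n -> 'M[C]_d) (l : nat)
  (w : Omega n k) : 'M[C]_d :=
  ((\sum_(w' | sameG l w w') weight p w')^-1)%:C *:
    \sum_(w' | sameG l w w') (weight p w')%:C *: f w'.1.
Definition Nmart n k d (p : cube n -> R) (f : cube n -> 'M[C]_d) (l : nat)
  (w : Omega n k) : 'M[C]_d :=
  cexp p f l w - cexp p f l.-1 w.
End Defs.

(* Main.v *)
Require Import Defs.
From HB Require Import structures.
From mathcomp Require Import all_boot all_order all_algebra.
From mathcomp Require Import complex.
From mathcomp Require Import reals.
From mathcomp Require Import ring lra zify.
Import Order.TTheory GRing.Theory Num.Theory.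
Local Open Scope ring_scope.
Local Open Scope complex_scope.
Set Implicit Arguments. Unset Strict Implicit. Unset Printing Implicit Defensive.

Section LA.
Variable R : realType.
Local Notation C := R[i].

Definition nsq (z : C) : R := complex.Re z ^+ 2 + complex.Im z ^+ 2.
Definition vsq d (v : 'cV[C]_d) : R := \sum_i nsq (v i 0).

Lemma nsq_ge0 z : 0 <= nsq z.
Proof. by rewrite /nsq addr_ge0 // sqr_ge0. Qed.

Lemma vsq_ge0 d (v : 'cV[C]_d) : 0 <= vsq v.
Proof. by apply: sumr_ge0 => i _; apply: nsq_ge0. Qed.

Lemma conjM (z : C) : Num.conj z * z = (nsq z)%:C.
Proof.
case: z => a b; rewrite /nsq /=; apply/eqP; rewrite eq_complex /=.
apply/andP; split; apply/eqP; ring.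
Qed.

Lemma nsqM (a b : C) : nsq (a * b) = nsq a * nsq b.
Proof. case: a => a1 a2; case: b => b1 b2; rewrite /nsq /=; ring. Qed.

Lemma nsqRM (c : R) (z : C) : nsq (c%:C * z) = c ^+ 2 * nsq z.
Proof. case: z => a b; rewrite /nsq /=; ring. Qed.

Lemma Re_sum (I : finType) (F : I -> C) : complex.Re (\sum_i F i) = \sum_i complex.Re (F i).
Proof. elim/big_rec2: _ => // i a b _ <-; by case: (F i); case: b. Qed.

Lemma Im_sum (I : finType) (F : I -> C) : complex.Im (\sum_i F i) = \sum_i complex.Im (F i).
Proof. elim/big_rec2: _ => // i a b _ <-; by case: (F i); case: b. Qed.

Lemma jensenR (I : finType) (q r : I -> R) : (forall i, 0 <= q i) ->
  (\sum_i q i * r i) ^+ 2 <= (\sum_i q i) * \sum_i q i * r i ^+ 2.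
Proof.
move=> q0; set s := \sum_i q i.
have s0 : 0 <= s by apply: sumr_ge0.
case: (eqVneq s 0) => [sE|sn0].
  have qz i : q i = 0.
    apply/eqP; rewrite eq_le q0 andbT -sE /s (bigD1 i) //= lerDl.
    by apply: sumr_ge0.
  rewrite sE mul0r big1 ?expr0n // => i _; by rewrite qz mul0r.
have sp : 0 < s by rewrite lt_def sn0.
set t := \sum_i q i * r i.
set m := t / s.
have H : 0 <= \sum_i q i * (r i - m) ^+ 2.
  by apply: sumr_ge0 => i _; apply: mulr_ge0 => //; apply: sqr_ge0.
have E : \sum_i q i * (r i - m) ^+ 2 =
   \sum_i q i * r i ^+ 2 - 2 * m * t + m ^+ 2 * s.
  rewrite /t /s mulr_sumr mulr_sumr -sumrN -!big_split /=.
  by apply: eq_bigr => i _; ring.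
rewrite E /m in H.
have : 0 <= s * (\sum_i q i * r i ^+ 2 - 2 * (t / s) * t + (t / s) ^+ 2 * s).
  by apply: mulr_ge0.
have -> : s * (\sum_i q i * r i ^+ 2 - 2 * (t / s) * t + (t / s) ^+ 2 * s)
   = s * \sum_i q i * r i ^+ 2 - t ^+ 2.
  by field.
by rewrite subr_ge0.
Qed.

Lemma jensenC (I : finType) (q : I -> R) (z : I -> C) : (forall i, 0 <= q i) ->
  nsq (\sum_i (q i)%:C * z i) <= (\sum_i q i) * \sum_i q i * nsq (z i).
Proof.
move=> q0; rewrite /nsq Re_sum Im_sum.
have -> : \sum_i q i * (complex.Re (z i) ^+ 2 + complex.Im (z i) ^+ 2) =
   \sum_i q i * complex.Re (z i) ^+ 2 + \sum_i q i * complex.Im (z i) ^+ 2.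
  by rewrite -big_split; apply: eq_bigr => i _ /=; rewrite mulrDr.
rewrite mulrDr; apply: lerD.
  have -> : \sum_i complex.Re ((q i)%:C * z i) = \sum_i q i * complex.Re (z i).
    by apply: eq_bigr => i _; case: (z i) => a b /=; ring.
  exact: jensenR.
have -> : \sum_i complex.Im ((q i)%:C * z i) = \sum_i q i * complex.Im (z i).
  by apply: eq_bigr => i _; case: (z i) => a b /=; ring.
exact: jensenR.
Qed.



Lemma nsq_le_vsq d (v : 'cV[C]_d) j : nsq (v j 0) <= vsq v.
Proof.
rewrite /vsq (bigD1 j) //= lerDl; apply: sumr_ge0 => i _; exact: nsq_ge0.
Qed.

Lemma vsq_bound d (D : 'M[C]_d) (v : 'cV[C]_d) : vsq v <= 1 ->
  vsq (D *m v) <= \sum_i d%:R * \sum_j nsq (D i j).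
Proof.
move=> v1; rewrite /vsq; apply: ler_sum => i _; rewrite mxE.
have -> : \sum_j D i j * v j 0 = \sum_j (1:R)%:C * (D i j * v j 0).
  by apply: eq_bigr => j _; rewrite mul1r.
apply: le_trans (@jensenC _ (fun _ => 1) (fun j => D i j * v j 0) (fun _ => ler01)) _.
rewrite sumr_const card_ord.
apply: ler_wpM2l => //; apply: ler_sum => j _.
rewrite mul1r nsqM -[X in _ <= X]mulr1; apply: ler_wpM2l; first exact: nsq_ge0.
exact: le_trans (nsq_le_vsq _ _) v1.
Qed.

Lemma vsqZ d (c : R) (v : 'cV[C]_d) : vsq (c%:C *: v) = c ^+ 2 * vsq v.
Proof.
rewrite /vsq mulr_sumr; apply: eq_bigr => i _; by rewrite mxE nsqRM.
Qed.

Lemma nsq_eq0 z : nsq z = 0 -> z = 0.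
Proof.
case: z => a b; rewrite /nsq /= => H.
have a0 : a ^+ 2 = 0 by apply/eqP; rewrite eq_le sqr_ge0 andbT -H lerDl sqr_ge0.
have b0 : b ^+ 2 = 0 by move: H; rewrite a0 add0r.
move/eqP: a0; rewrite sqrf_eq0 => /eqP ->; move/eqP: b0; rewrite sqrf_eq0 => /eqP ->.
by [].
Qed.

Lemma vsq_eq0 d (v : 'cV[C]_d) : vsq v = 0 -> v = 0.
Proof.
move=> /eqP; rewrite psumr_eq0 => [/allP H|i _]; last exact: nsq_ge0.
apply/matrixP => i j; rewrite ord1 mxE; apply: nsq_eq0; apply/eqP.
exact: H (mem_index_enum _).
Qed.

Lemma opnorm_vsq d (D : 'M[C]_d) (e : R) (v : 'cV[C]_d) : 0 <= e ->
  opnorm D <= e -> vsq (D *m v) <= e ^+ 2 * vsq v.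
Proof.
move=> e0 De.
set E := (fun r : R => exists v : 'cV[C]_d, vnorm v <= 1 /\ r = vnorm (D *m v)).
have hub : classical_sets.has_ubound E.
  exists (Num.sqrt (\sum_i d%:R * \sum_j nsq (D i j))) => r [u [u1 ->]].
  rewrite /vnorm; apply: ler_wsqrtr; apply: vsq_bound.
  by move: u1; rewrite /vnorm -{1}sqrtr1 ler_sqrt.
have supE : forall u, vnorm u <= 1 -> vnorm (D *m u) <= opnorm D.
  move=> w w1; exact: (ub_le_sup hub) (ex_intro _ w (conj w1 erefl)).
case: (eqVneq (vsq v) 0) => [/vsq_eq0 ->|sn0].
  by rewrite mulmx0 /vsq big1 ?mulr0 // => i _; rewrite mxE /nsq /= expr0n /= addr0.
have sp : 0 < vsq v by rewrite lt_def sn0 vsq_ge0.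
set t := Num.sqrt (vsq v).
have tp : 0 < t by rewrite sqrtr_gt0.
have tt : t ^+ 2 = vsq v by rewrite sqr_sqrtr // vsq_ge0.
set u := (t^-1)%:C *: v.
have u1 : vnorm u <= 1.
  rewrite /vnorm -/(vsq u) /u vsqZ exprVn tt mulVf ?sqrtr1 //.
have := le_trans (supE u u1) De.
rewrite /vnorm -/(vsq (D *m u)) /u -scalemxAr vsqZ exprVn tt.
move=> H.
have H2 : (vsq v)^-1 * vsq (D *m v) <= e ^+ 2.
  by rewrite -ler_sqrt ?sqr_ge0 // sqrtr_sqr ger0_norm.
have := ler_wpM2l (vsq_ge0 v) H2.
by rewrite mulrA mulfV ?gt_eqF // mul1r mulrC.
Qed.

Lemma ctrans_mul m p q (A : 'M[C]_(m, p)) (B : 'M[C]_(p, q)) :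
  ctrans (A *m B) = ctrans B *m ctrans A.
Proof.
apply/matrixP => i j; rewrite /ctrans !mxE rmorph_sum; apply: eq_bigr => k _.
by rewrite !mxE rmorphM mulrC.
Qed.

Lemma ctrans_vsq d (u : 'cV[C]_d) : (ctrans u *m u) 0 0 = (vsq u)%:C.
Proof.
rewrite mxE /vsq rmorph_sum; apply: eq_bigr => j _.
by rewrite !mxE conjM.
Qed.

Lemma psd_of_bound d (N : 'M[C]_d) (b : R) : hermitian_mx N ->
  (forall v, vsq (N *m v) <= b * vsq v) -> loewner (N *m N) (b%:C)%:M.
Proof.
move=> hN H v.
rewrite mulmxBr mulmxBl mul_mx_scalar -scalemxAl mulmxA.
rewrite -(mulmxA (ctrans v *m N)) -{1}hN -ctrans_mul.
have := ctrans_vsq v; have := ctrans_vsq (N *m v); rewrite !mxE => -> ->.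
by rewrite -rmorphM -rmorphB ler0c subr_ge0.
Qed.


Lemma decomp_bound d (T : finType) (N : 'M[C]_d) (c : R) (q : T -> R)
  (D : T -> 'M[C]_d) (a : R) :
  hermitian_mx N -> 0 <= a -> c ^+ 2 <= 1 -> (forall t, 0 <= q t) ->
  \sum_t q t = 1 ->
  (forall t, 0 < q t -> opnorm (D t) <= 2 * a) ->
  N = c%:C *: \sum_t (q t)%:C *: D t ->
  loewner (N *m N) ((4 * a ^+ 2)%:C)%:M.
Proof.
move=> hN a0 c1 q0 q1 HD NE; apply: psd_of_bound => // v.
have Nv : N *m v = c%:C *: \sum_t (q t)%:C *: (D t *m v).
  rewrite NE -scalemxAl mulmx_suml; congr (_ *: _).
  by apply: eq_bigr => t _; rewrite -scalemxAl.
have step : forall i, nsq ((N *m v) i 0) <= \sum_t q t * nsq ((D t *m v) i 0).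
  move=> i; rewrite Nv mxE summxE nsqRM.
  under eq_bigr do rewrite mxE.
  apply: (@le_trans _ _ (nsq (\sum_t (q t)%:C * (D t *m v) i 0))).
    rewrite -[X in _ <= X]mul1r; apply: ler_wpM2r => //; exact: nsq_ge0.
  by apply: le_trans (jensenC (fun t => (D t *m v) i 0) q0) _; rewrite q1 mul1r.
rewrite /vsq; apply: le_trans (ler_sum _ (fun i _ => step i)) _.
rewrite exchange_big /= -/(vsq v).
have -> : 4 * a ^+ 2 * vsq v = \sum_t q t * (4 * a ^+ 2 * vsq v).
  by rewrite -mulr_suml q1 mul1r.
apply: ler_sum => t _; rewrite -mulr_sumr -/(vsq (D t *m v)).
case: (eqVneq (q t) 0) => [->|qn0]; first by rewrite !mul0r.
have qp : 0 < q t by rewrite lt_def qn0 q0.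
apply: ler_wpM2l => //.
have -> : 4 * a ^+ 2 = (2 * a) ^+ 2 by rewrite exprMn; congr (_ * _); rewrite expr2 -natrM.
apply: opnorm_vsq; last exact: HD.
by rewrite mulr_ge0.
Qed.

End LA.

Section Y.
Variables (R : realType) (n k : nat).

Lemma sum_option (F : option 'I_n -> R) :
  \sum_o F o = F None + \sum_i F (Some i).
Proof.
rewrite (bigD1 None) //=; congr (_ + _).
rewrite (reindex_omap Some id) /=; last by case.
by apply: eq_bigl => i; rewrite eqxx.
Qed.

Lemma sum_unif (S : {set 'I_n}) : \sum_o unif R S o = 1.
Proof.
rewrite sum_option /unif; case: ifP => [_|/negbT Sn0].
  by rewrite eqxx big1 ?addr0.
rewrite add0r -mulr_suml.
have -> : \sum_i (i \in S)%:R = #|S|%:R :> R.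
  rewrite -sum1_card natr_sum [RHS]big_mkcond; apply: eq_bigr => i _; by case: (i \in S).
by rewrite mulfV // pnatr_eq0 cards_eq0.
Qed.

Lemma avail_prefix (x : cube n) (y y' : {ffun 'I_k -> option 'I_n}) (l : 'I_k) :
  (forall j : 'I_k, (j < l)%N -> y j = y' j) -> avail x y l = avail x y' l.
Proof.
move=> H; apply/setP => m; rewrite !inE; congr (_ && (_ && _)).
apply: eq_forallb => j; case: (ltnP j l) => //= jl.
by rewrite H.
Qed.

Definition upd (y0 : {ffun 'I_k -> option 'I_n}) (j0 : 'I_k) o :
  {ffun 'I_k -> option 'I_n} := [ffun j => if j == j0 then o else y0 j].

Lemma sum_prefix (x : cube n) (y0 : {ffun 'I_k -> option 'I_n}) r : (r <= k)%N ->
  \sum_(y : {ffun 'I_k -> option 'I_n} | [forall j : 'I_k, (j < r)%N ==> (y j == y0 j)])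
     \prod_(l : 'I_k) unif R (avail x y l) (y l)
  = \prod_(l : 'I_k | (l < r)%N) unif R (avail x y0 l) (y0 l).
Proof.
move=> Hr.
have main : forall m r (y0 : {ffun 'I_k -> option 'I_n}), (k - r)%N = m -> (r <= k)%N ->
  \sum_(y : {ffun 'I_k -> option 'I_n} | [forall j : 'I_k, (j < r)%N ==> (y j == y0 j)])
     \prod_(l : 'I_k) unif R (avail x y l) (y l)
  = \prod_(l : 'I_k | (l < r)%N) unif R (avail x y0 l) (y0 l).
  elim => [|m IH] {}r {}y0 Hm {}Hr.
    have rk : r = k by apply/eqP; rewrite eqn_leq Hr /= -subn_eq0 Hm.
    subst r.
    rewrite (eq_bigl (pred1 y0)); last first.
      move=> y /=; apply/forallP/eqP => [H|->]; last by move=> j; rewrite eqxx implybT.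
      by apply/ffunP => j; move: (H j); rewrite ltn_ord /= => /eqP.
    rewrite big_pred1_eq; apply: eq_bigl => l; by rewrite ltn_ord.
  have rk : (r < k)%N by rewrite -subn_gt0 Hm.
  set j0 := Ordinal rk.
  rewrite (partition_big (fun y : {ffun 'I_k -> option 'I_n} => y j0) xpredT) //=.
  have E : forall o, \sum_(y : {ffun 'I_k -> option 'I_n} | [forall j : 'I_k, (j < r)%N ==> (y j == y0 j)] && (y j0 == o))
      \prod_(l : 'I_k) unif R (avail x y l) (y l)
      = \prod_(l : 'I_k | (l < r)%N) unif R (avail x y0 l) (y0 l) * unif R (avail x y0 j0) o.
    move=> o.
    rewrite (eq_bigl (fun y : {ffun 'I_k -> option 'I_n} =>
       [forall j : 'I_k, (j < r.+1)%N ==> (y j == upd y0 j0 o j)])); last first.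
      move=> y; apply/idP/idP.
      + move=> /andP [/forallP H /eqP yo]; apply/forallP => j; apply/implyP => jr.
        rewrite /upd ffunE; case: (eqVneq j j0) => [->|jn]; first by rewrite yo.
        have := H j; move: jr; rewrite ltnS leq_eqVlt => /orP [/eqP jE|->]; last by [].
        by move: jn; rewrite -(inj_eq val_inj) /= jE eqxx.
      + move=> /forallP H; apply/andP; split.
          apply/forallP => j; apply/implyP => jr; have := H j.
          rewrite ltnS (ltnW jr) /= /upd ffunE; case: (eqVneq j j0) => [jE|_ //].
          by move: jr; rewrite jE /= ltnn.
        by have := H j0; rewrite /= ltnSn /upd ffunE eqxx.
    rewrite IH //; last by rewrite subnS Hm.
    rewrite [LHS](bigD1 j0) /=; last by [].
    rewrite mulrC; congr (_ * _).
      apply: eq_big => l.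
        by rewrite ltnS ltn_neqAle -(inj_eq val_inj) /= andbC.
      move=> /andP [ll lj0]; rewrite /upd ffunE (negbTE lj0); congr (unif _ _ _).
      apply: avail_prefix => j jl; rewrite ffunE; case: eqP => // jE.
      by move: (leq_trans jl ll); rewrite jE ltnn.
    rewrite /upd ffunE eqxx; congr (unif _ _ _); apply: avail_prefix => j jl.
    by rewrite ffunE; case: eqP => // jE; rewrite jE ltnn in jl.
  rewrite (eq_bigr _ (fun o _ => E o)) -mulr_sumr sum_unif mulr1.
  done.
exact: main.
Qed.


Definition Pset (y : {ffun 'I_k -> option 'I_n}) (r : nat) : {set 'I_n} :=
  [set m : 'I_n | [exists j : 'I_k, ((j < r)%N && (y j == Some m))]].
Definition Lo : {set 'I_n} := [set m : 'I_n | (m < k)%N].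
Definition Hi (z : cube n) : {set 'I_n} := [set m : 'I_n | z m && (k <= m)%N].

Lemma unif_ge0 (S : {set 'I_n}) (o : option 'I_n) : 0 <= unif R S o.
Proof.
rewrite /unif; case: ifP => _; first exact: ler0n.
case: o => [m|//]; apply: divr_ge0; exact: ler0n.
Qed.

Lemma unif_nz (S : {set 'I_n}) (o : option 'I_n) : unif R S o != 0 ->
  (S = set0 /\ o = None) \/ (exists m, o = Some m /\ m \in S).
Proof.
rewrite /unif; case: ifP => [/eqP S0|_].
  by case: o => [m|] /=; [rewrite eqxx | left].
case: o => [m|]; last by rewrite eqxx.
by case: (boolP (m \in S)) => mS; [right; exists m | rewrite mul0r eqxx].
Qed.

Lemma unif_eq (S S' : {set 'I_n}) (o : option 'I_n) : #|S| = #|S'| ->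
  (forall m, o = Some m -> (m \in S) = (m \in S')) -> unif R S o = unif R S' o.
Proof.
move=> cS H; rewrite /unif -!cards_eq0 cS; case: o H => [m|] H //.
by rewrite (H m erefl).
Qed.

Lemma avail_eq (z : cube n) (y : {ffun 'I_k -> option 'I_n}) (l : 'I_k) :
  avail z y l = Hi z :\: Pset y l.
Proof.
apply/setP => m; rewrite !inE negb_exists.
have -> : [forall j : 'I_k, (j < l)%N ==> (y j != Some m)] =
    [forall j : 'I_k, ~~ ((j < l)%N && (y j == Some m))].
  by apply: eq_forallb => j; rewrite negb_and implybE.
by case: (z m); case: (k <= m)%N; case: [forall j, _].
Qed.

Lemma card_Hi (z : cube n) : #|supp z| = k -> #|Hi z| = (k - #|supp z :&: Lo|)%N.
Proof.
move=> cz; have -> : Hi z = supp z :\: Lo.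
  by apply/setP => m; rewrite !inE -leqNgt andbC.
by rewrite cardsD cz.
Qed.

Lemma prod_prefix (x0 x : cube n) (y0 : {ffun 'I_k -> option 'I_n}) (r : nat) :
  #|supp x0| = k -> #|supp x| = k -> ((0 < r)%N -> agree Lo x x0) ->
  0 < \prod_(l : 'I_k) unif R (avail x0 y0 l) (y0 l) ->
  \prod_(l : 'I_k | (l < r)%N) unif R (avail x y0 l) (y0 l) =
  if [forall m in Pset y0 r, x m] then
    \prod_(l : 'I_k | (l < r)%N) unif R (avail x0 y0 l) (y0 l) else 0.
Proof.
move=> c0 c1 ag pos.
have F : forall l : 'I_k, (avail x0 y0 l = set0 /\ y0 l = None) \/
    (exists m, y0 l = Some m /\ m \in avail x0 y0 l).
  move=> l; apply: unif_nz; apply/eqP => H; move: pos.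
  by rewrite (bigD1 l) //= H mul0r ltxx.
have PHi : forall m l, m \in Pset y0 l -> m \in Hi x0.
  move=> m l; rewrite inE => /existsP [j /andP [_ /eqP yj]].
  case: (F j) => [[_ ]|[m' [ym' ]]]; first by rewrite yj.
  move: ym'; rewrite yj => -[<-]; rewrite avail_eq !inE => /andP [_ ->].
  by [].
case: ifP => [/forall_inP Hx|/negbT].
  apply: eq_bigr => l lr.
  have ag' := ag (leq_ltn_trans (leq0n _) lr).
  apply: unif_eq.
    have sub : forall z : cube n, (forall m, m \in Pset y0 l -> z m) ->
        #|avail z y0 l| = (#|Hi z| - #|Pset y0 l|)%N.
      move=> z Hz; rewrite avail_eq cardsD (setIidPr _) //.
      apply/subsetP => m mP; rewrite inE Hz //=.
      by move: (PHi m l mP); rewrite inE => /andP [_ ->].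
    rewrite sub; last first.
      move=> m mP; apply: Hx; move: mP; rewrite !inE => /existsP [j /andP [jl jm]].
      by apply/existsP; exists j; rewrite jm (ltn_trans jl lr).
    rewrite sub; last by move=> m /PHi; rewrite inE => /andP [].
    rewrite !card_Hi //; have -> // : supp x :&: Lo = supp x0 :&: Lo.
    apply/setP => m; rewrite !inE; case: (boolP (m < k)%N) => mk; last by rewrite !andbF.
    by move/forall_inP: ag' => /(_ m); rewrite inE mk => /(_ isT) /eqP ->.
  move=> m ym; case: (F l) => [[_ ]|[m' [ym' Hm']]]; first by rewrite ym.
  move: ym'; rewrite ym => -[mE]; subst m'.
  rewrite Hm'; move: Hm'; rewrite !inE => /andP [_ /andP [-> ->]].
  rewrite Hx ?andbT //; rewrite inE; apply/existsP; exists l; by rewrite lr ym eqxx.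
rewrite negb_forall_in => /existsP [m /andP [mP xm]].
move: (mP); rewrite inE => /existsP [j /andP [jr /eqP yj]].
rewrite (bigD1 j) //= yj /unif; case: ifP => _; first by rewrite mul0r.
by rewrite avail_eq !inE (negbTE xm) andFb andbF !mul0r.
Qed.


Lemma factor_pos (x0 : cube n) (y0 : {ffun 'I_k -> option 'I_n}) (l : 'I_k) :
  0 < \prod_(l : 'I_k) unif R (avail x0 y0 l) (y0 l) ->
  0 < unif R (avail x0 y0 l) (y0 l).
Proof.
move=> pos; rewrite lt_def unif_ge0 andbT; apply/eqP => H; move: pos.
by rewrite (bigD1 l) //= H mul0r ltxx.
Qed.

Lemma Pset_Hi (x0 : cube n) (y0 : {ffun 'I_k -> option 'I_n}) m r :
  0 < \prod_(l : 'I_k) unif R (avail x0 y0 l) (y0 l) ->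
  m \in Pset y0 r -> m \in Hi x0.
Proof.
move=> pos; rewrite inE => /existsP [j /andP [_ /eqP yj]].
have := factor_pos j pos; rewrite lt_def => /andP [/unif_nz [[_ yN]|[m' [ym' Hm]]] _].
  by rewrite yj in yN.
move: ym'; rewrite yj => -[mE]; subst m'.
by move: Hm; rewrite avail_eq !inE => /andP [_ ->].
Qed.

Lemma Pset0 (y : {ffun 'I_k -> option 'I_n}) : Pset y 0 = set0.
Proof. by apply/setP => m; rewrite !inE; apply/existsP => -[j]. Qed.

Lemma Pset_S (y : {ffun 'I_k -> option 'I_n}) (j : 'I_k) :
  Pset y j.+1 = Pset y j :|: [set m | y j == Some m].
Proof.
apply/setP => m; rewrite !inE; apply/existsP/orP.
  move=> [j' /andP [jl ym]]; move: jl; rewrite ltnS leq_eqVlt => /orP [/eqP jE|jl].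
    by right; have -> : j = j' by apply: val_inj. 
  by left; apply/existsP; exists j'; rewrite jl.
case=> [/existsP [j' /andP [jl ym]]|ym].
  by exists j'; rewrite ym (ltn_trans jl).
by exists j; rewrite ym ltnSn.
Qed.

End Y.

Section B.
Variables (R : realType) (n d : nat) (p : cube n -> R) (f : cube n -> 'M[R[i]]_d).
Hypothesis p0 : forall x, 0 <= p x.

Definition EX (S : {set 'I_n}) (a : cube n) : 'M[R[i]]_d :=
  \sum_x (condlaw p S a x)%:C *: f x.

Lemma agree_refl (S : {set 'I_n}) a : agree S a a.
Proof. by apply/forall_inP => m _. Qed.

Lemma PS_ge0 S a : 0 <= PS p S a.
Proof. by apply: sumr_ge0. Qed.

Lemma PS_pos S a : 0 < p a -> 0 < PS p S a.
Proof.
move=> pa; rewrite /PS (bigD1 a) ?agree_refl //=.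
apply: lt_le_trans pa _; rewrite lerDl; exact: sumr_ge0.
Qed.

Lemma EX_alt S a : 0 < PS p S a ->
  EX S a = ((PS p S a)^-1)%:C *: \sum_(x | agree S x a) (p x)%:C *: f x.
Proof.
move=> _; rewrite /EX /condlaw scaler_sumr [RHS]big_mkcond /=.
apply: eq_bigr => x _; case: (agree S x a).
  by rewrite scalerA -rmorphM mulrC.
by rewrite rmorph0 !scale0r.
Qed.

Lemma agreeU1 i (S : {set 'I_n}) x a :
  agree (i |: S) x a = (x i == a i) && agree S x a.
Proof.
apply/forall_inP/andP => [H|[H1 /forall_inP H2] m].
  split; first by apply: H; rewrite setU11.
  by apply/forall_inP => m mS; apply: H; rewrite setU1r.
by rewrite in_setU1 => /orP [/eqP ->|/H2].
Qed.

Definition flip (x0 : cube n) (i : 'I_n) : cube n :=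
  [ffun m => if m == i then ~~ x0 i else x0 m].

Lemma agree_flip (S : {set 'I_n}) i x x0 : i \notin S ->
  agree S x (flip x0 i) = agree S x x0.
Proof.
move=> iS; apply: eq_forallb_in => m mS; rewrite /flip ffunE.
case: (eqVneq m i) => // mi; by rewrite -mi mS in iS.
Qed.

Lemma sum_split (V : zmodType) (F : cube n -> V) (S : {set 'I_n}) i x0 :
  i \notin S ->
  \sum_(x | agree S x x0) F x =
  \sum_(x | agree (i |: S) x x0) F x + \sum_(x | agree (i |: S) x (flip x0 i)) F x.
Proof.
move=> iS; rewrite !(big_mkcond (fun x => agree _ x _)) -big_split /=.
apply: eq_bigr => x _; rewrite !agreeU1 agree_flip // /flip ffunE eqxx.
case: (agree S x x0); rewrite ?andbF ?addr0 //.
by case: (x i); case: (x0 i); rewrite /= ?addr0 ?add0r.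
Qed.

Lemma condlaw_sum S b : 0 < PS p S b -> \sum_u condlaw p S b u = 1.
Proof.
move=> Pb; rewrite /condlaw -big_mkcond /= -mulr_suml mulfV //.
by rewrite gt_eqF.
Qed.

Lemma condlaw_ge0 S b u : 0 <= condlaw p S b u.
Proof.
rewrite /condlaw; case: ifP => // _; apply: divr_ge0 => //; exact: PS_ge0.
Qed.

Lemma condlaw_agree S b u : 0 < condlaw p S b u -> agree S u b.
Proof. by rewrite /condlaw; case: ifP => // _; rewrite ltxx. Qed.

Lemma coupling_sum S a b (Q : cube n * cube n -> R) :
  (forall u, \sum_v Q (u, v) = condlaw p S b u) ->
  (forall v, \sum_u Q (u, v) = condlaw p S a v) ->
  \sum_t (Q t)%:C *: (f t.1 - f t.2) = EX S b - EX S a.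
Proof.
move=> H1 H2.
have -> : \sum_t (Q t)%:C *: (f t.1 - f t.2) =
    \sum_u \sum_v (Q (u, v))%:C *: (f u - f v).
  by rewrite pair_bigA; apply: eq_bigr => -[u v].
rewrite /EX.
under eq_bigr do under eq_bigr do rewrite scalerBr.
under eq_bigr do rewrite sumrB.
rewrite sumrB; congr (_ - _).
  apply: eq_bigr => u _; by rewrite -H1 rmorph_sum scaler_suml.
rewrite exchange_big /=; apply: eq_bigr => v _; by rewrite -H2 rmorph_sum scaler_suml.
Qed.

Variable alpha : 'I_n -> R.
Hypothesis alpha0 : forall m, 0 <= alpha m.

Lemma dalpha_two (u v : cube n) (i j : 'I_n) : (forall m, u m != v m -> (m == i) || (m == j)) ->
  dalpha alpha u v <= alpha i + alpha j.
Proof.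
move=> H.
have E : forall i0, \sum_m alpha m * (m == i0)%:R = alpha i0.
  move=> i0; rewrite (bigD1 i0) //= eqxx mulr1 big1 ?addr0 // => m /negbTE ->.
  by rewrite mulr0.
rewrite -(E i) -(E j) -big_split /=; apply: ler_sum => m _.
case: (boolP (u m != v m)) => uv /=; last by rewrite mulr0 addr_ge0 // mulr_ge0.
rewrite mulr1; move: (H m uv) => /orP [/eqP ->|/eqP ->]; rewrite eqxx mulr1.
  by rewrite lerDl mulr_ge0.
by rewrite lerDr mulr_ge0.
Qed.

Lemma dalpha_refl (u : cube n) : dalpha alpha u u = 0.
Proof. by rewrite /dalpha big1 // => m _; rewrite eqxx mulr0. Qed.

Lemma coupleB (S : {set 'I_n}) (i : 'I_n) (a b : cube n) (a0 : R) : SCP p ->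
  alpha i <= a0 -> (forall j, j \notin S -> alpha j <= a0) ->
  i \in S -> a i -> ~~ b i -> (forall m, m != i -> a m = b m) ->
  0 < PS p S a -> 0 < PS p S b ->
  exists q : cube n * cube n -> R,
    [/\ forall t, 0 <= q t, \sum_t q t = 1,
        forall t, 0 < q t -> dalpha alpha t.1 t.2 <= 2 * a0 &
        EX S b - EX S a = \sum_t (q t)%:C *: (f t.1 - f t.2)].
Proof.
move=> scp ai aS iS ai1 bi0 ab Pa Pb.
have tr : tri S a b.
  apply/orP; right; apply/existsP; exists i; rewrite iS ai1 bi0 /=.
  by apply/forall_inP => m _; apply/implyP => mi; rewrite ab.
have [Q [Q0 Q1 Q2 Q3]] := scp S a b tr Pa Pb.
exists (fun t => Q t); split => //.
- have -> : \sum_t Q t = \sum_u \sum_v Q (u, v).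
    by rewrite pair_bigA; apply: eq_bigr => -[u v].
  under eq_bigr do rewrite Q1.
  exact: condlaw_sum.
- move=> [u v] /= Qp.
  have cu : 0 < condlaw p S b u.
    rewrite -Q1; apply: lt_le_trans Qp _.
    by rewrite (bigD1 v) //= lerDl; apply: sumr_ge0.
  have cv : 0 < condlaw p S a v.
    rewrite -Q2; apply: lt_le_trans Qp _.
    by rewrite (bigD1 u) //= lerDl; apply: sumr_ge0.
  have au := condlaw_agree cu; have av := condlaw_agree cv.
  have inS : forall m, m \in S -> u m != v m -> m == i.
    move=> m mS; move/forall_inP: au => /(_ m mS) /eqP ->.
    move/forall_inP: av => /(_ m mS) /eqP ->.
    by apply: contraR => mi; rewrite (ab m mi).
  have a00 : 0 <= a0 by apply: le_trans ai; exact: alpha0.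
  move: (Q3 _ Qp) => /orP [/forall_inP ag|/existsP [j /andP [jS /and3P [_ _ /forall_inP H]]]].
    apply: le_trans (dalpha_two (i := i) (j := i) _) _.
      move=> m uv; case: (boolP (m \in S)) => mS; first by rewrite (inS m mS uv).
      by move: (ag m); rewrite inE mS => /(_ isT) /= /eqP uvE; rewrite uvE eqxx in uv.
    by rewrite mulr2n mulrDl mul1r lerD.
  apply: le_trans (dalpha_two (i := i) (j := j) _) _.
    move=> m uv; case: (boolP (m \in S)) => mS; first by rewrite (inS m mS uv).
    have := H m; rewrite inE mS => /(_ isT); apply: contraLR; rewrite negb_or => /andP [_ mj].
    by rewrite mj /= uv.
  rewrite mulr2n mulrDl mul1r lerD //; apply: aS.
  by move: jS; rewrite inE.
- by symmetry; apply: coupling_sum.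
Qed.


Lemma alg_step (A0 A1 : 'M[R[i]]_d) (P0 P1 : R) : 0 < P0 -> 0 < P1 ->
  (P0^-1)%:C *: A0 - ((P0 + P1)^-1)%:C *: (A0 + A1) =
  (P1 / (P0 + P1))%:C *: ((P0^-1)%:C *: A0 - (P1^-1)%:C *: A1).
Proof.
move=> h0 h1.
have s0 : P0 + P1 != 0 by rewrite gt_eqF // addr_gt0.
have E1 : P1 / (P0 + P1) * P0^-1 = P0^-1 - (P0 + P1)^-1.
  by field; rewrite s0 gt_eqF.
have E2 : P1 / (P0 + P1) * P1^-1 = (P0 + P1)^-1.
  by field; rewrite s0 gt_eqF.
rewrite scalerBr !scalerA -!rmorphM E1 E2 rmorphB scalerBl scalerDr.
by rewrite opprD addrA.
Qed.

Lemma stepB (S' : {set 'I_n}) (i : 'I_n) (x0 : cube n) (a0 : R) : SCP p ->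
  alpha i <= a0 -> (forall j, j \notin i |: S' -> alpha j <= a0) -> 0 < p x0 ->
  exists c (q : cube n * cube n -> R),
    [/\ c ^+ 2 <= 1, forall t, 0 <= q t, \sum_t q t = 1,
        forall t, 0 < q t -> dalpha alpha t.1 t.2 <= 2 * a0 &
        EX (i |: S') x0 - EX S' x0 = c%:C *: \sum_t (q t)%:C *: (f t.1 - f t.2)].
Proof.
move=> scp ai aS px0.
have a00 : 0 <= a0 by apply: le_trans ai; exact: alpha0.
have degen : EX (i |: S') x0 - EX S' x0 = 0 ->
  exists c (q : cube n * cube n -> R),
    [/\ c ^+ 2 <= 1, forall t, 0 <= q t, \sum_t q t = 1,
        forall t, 0 < q t -> dalpha alpha t.1 t.2 <= 2 * a0 &
        EX (i |: S') x0 - EX S' x0 = c%:C *: \sum_t (q t)%:C *: (f t.1 - f t.2)].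
  move=> E0; exists 0, (fun t => (t == (x0, x0))%:R); split.
  - by rewrite expr0n /= ler01.
  - move=> t; exact: ler0n.
  - by rewrite (bigD1 (x0, x0)) //= eqxx big1 ?addr0 // => t /negbTE ->.
  - move=> t; case: (eqVneq t (x0, x0)) => [-> _|]; last by rewrite ltxx.
    by rewrite dalpha_refl mulr_ge0.
  - by rewrite E0 rmorph0 scale0r.
case: (boolP (i \in S')) => iS.
  by apply: degen; rewrite (setUidPr _) ?sub1set // subrr.
set S := i |: S'; set x1 := flip x0 i.
have P0 : 0 < PS p S x0 := PS_pos S px0.
have PSsplit : PS p S' x0 = PS p S x0 + PS p S x1 by rewrite /PS (sum_split _ _ iS).
have EXS' : EX S' x0 = ((PS p S x0 + PS p S x1)^-1)%:C *:
    (\sum_(x | agree S x x0) (p x)%:C *: f x + \sum_(x | agree S x x1) (p x)%:C *: f x).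
  by rewrite EX_alt ?PS_pos // PSsplit (sum_split _ _ iS).
case: (eqVneq (PS p S x1) 0) => [P1z|P1nz].
  apply: degen; rewrite EXS' EX_alt // P1z addr0.
  have := psumr_eq0P (fun x _ => p0 x) P1z => H.
  have -> : \sum_(x | agree S x x1) (p x)%:C *: f x = 0.
    by apply: big1 => x ax; rewrite (H x ax) rmorph0 scale0r.
  by rewrite addr0 subrr.
have P1 : 0 < PS p S x1 by rewrite lt_def P1nz PS_ge0.
set c := PS p S x1 / (PS p S x0 + PS p S x1).
have key : EX S x0 - EX S' x0 = c%:C *: (EX S x0 - EX S x1).
  by rewrite EXS' !EX_alt // alg_step.
have c0 : 0 <= c by apply: divr_ge0; [exact: PS_ge0 | rewrite addr_ge0 // PS_ge0].
have c1 : c <= 1.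
  by rewrite /c ler_pdivrMr ?addr_gt0 // mul1r lerDr PS_ge0.
have c2 : c ^+ 2 <= 1.
  by rewrite expr2 -[X in _ <= X]mulr1; apply: ler_pM.
have iSS : i \in S by rewrite /S setU11.
have x1i : x1 i = ~~ x0 i by rewrite /x1 /flip ffunE eqxx.
have x1m : forall m, m != i -> x0 m = x1 m.
  by move=> m mi; rewrite /x1 /flip ffunE (negbTE mi).
case: (boolP (x0 i)) => xi.
  have nb : ~~ x1 i by rewrite x1i xi.
  have [q [q0 q1 q2 q3]] := coupleB scp ai aS iSS xi nb x1m P0 P1.
  exists (- c), q; split => //; first by rewrite sqrrN.
  by rewrite key -q3 rmorphN scaleNr -scalerN opprB.
have a1 : x1 i by rewrite x1i.
have [q [q0 q1 q2 q3]] := coupleB scp ai aS iSS a1 xi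
   (fun m mi => esym (x1m m mi)) P1 P0.
by exists c, q; split => //; rewrite key -q3.
Qed.

End B.

Section A.
Variables (R : realType) (n k d : nat) (p : cube n -> R) (f : cube n -> 'M[R[i]]_d).
Hypothesis p0 : forall x, 0 <= p x.
Hypothesis hom : homogeneous k p.

Definition Sl (l : nat) (w : Omega n k) : {set 'I_n} :=
  [set m : 'I_n | (m < minn l k)%N] :|: Pset w.2 (l - k).

Lemma agreeU (A B : {set 'I_n}) x a :
  agree (A :|: B) x a = agree A x a && agree B x a.
Proof.
apply/forall_inP/andP => [H|[/forall_inP H1 /forall_inP H2] m].
  by split; apply/forall_inP => m mA; apply: H; rewrite inE mA ?orbT.
by rewrite inE => /orP [/H1|/H2].
Qed.

Lemma cexpE (l : nat) (w : Omega n k) : (l <= 2 * k)%N -> 0 < weight p w ->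
  cexp p f l w = EX p f (Sl l w) w.1.
Proof.
case: w => x0 y0 l2k ww /=.
have pr0 : 0 <= \prod_(j : 'I_k) unif R (avail x0 y0 j) (y0 j).
  by apply: prodr_ge0 => j _; exact: unif_ge0.
have [px0 pos] : 0 < p x0 /\ 0 < \prod_(j : 'I_k) unif R (avail x0 y0 j) (y0 j).
  move: ww; rewrite /weight /= lt_def mulf_eq0 negb_or => /andP [/andP [h1 h2] _].
  by split; rewrite lt_def ?h1 ?h2 ?p0.
have cx0 : #|supp x0| = k := hom px0.
set r := (l - k)%N.
have rk : (r <= k)%N by rewrite /r; lia.
set K := \prod_(j : 'I_k | (j < r)%N) unif R (avail x0 y0 j) (y0 j).
have Kpos : 0 < K by apply: prodr_gt0 => j _; exact: factor_pos.
have key : forall x, \sum_(y | sameG l (x0, y0) (x, y)) weight p (x, y) =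
    K * ((agree (Sl l (x0, y0)) x x0)%:R * p x).
  move=> x.
  set A := [forall i : 'I_n, (i < minn l k)%N ==> (x0 i == x i)].
  have E : forall y : {ffun 'I_k -> option 'I_n}, sameG l (x0, y0) (x, y) =
      A && [forall j : 'I_k, (j < r)%N ==> (y j == y0 j)].
    by move=> y; rewrite /sameG /=; congr (_ && _); apply: eq_forallb => j; rewrite eq_sym.
  rewrite (eq_bigl _ _ E).
  have agE : agree (Sl l (x0, y0)) x x0 = A && [forall m in Pset y0 r, x m].
    rewrite /Sl agreeU; congr (_ && _).
      apply/forall_inP/forallP => [H i|H i].
        by apply/implyP => il; rewrite eq_sym; apply: H; rewrite inE.
      by rewrite inE => il; have := H i; rewrite il eq_sym.
    apply: eq_forallb_in => m mP /=.
    have := Pset_Hi pos mP; rewrite inE => /andP [-> _].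
    by rewrite eqb_id.
  case: (boolP A) => HA /=; last first.
    by rewrite big_pred0 // agE (negbTE HA) /= mul0r mulr0.
  rewrite /weight /= -mulr_sumr (sum_prefix R x y0 rk).
  case: (eqVneq (p x) 0) => [->|pxn0]; first by rewrite !mul0r !mulr0.
  have px : 0 < p x by rewrite lt_def pxn0 p0.
  rewrite (prod_prefix cx0 (hom px)) //; last first.
    move=> r0; apply/forall_inP => m; rewrite inE => mk.
    move/forallP: HA => /(_ m) /implyP; rewrite eq_sym; apply.
    suff -> : minn l k = k by [].
    by apply/minn_idPr; move: r0; rewrite /r; lia.
  rewrite agE HA /=; case: ifP => _; first by rewrite mul1r mulrC.
  by rewrite mul0r !mulr0.
have dbl : forall (V : zmodType) (G : Omega n k -> V),
    \sum_(w' | sameG l (x0, y0) w') G w' =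
    \sum_x \sum_(y | sameG l (x0, y0) (x, y)) G (x, y).
  by move=> V G; rewrite pair_big_dep; apply: eq_big => -[x y].
rewrite /cexp !dbl.
under eq_bigr do rewrite key.
have -> : \sum_x \sum_(y | sameG l (x0, y0) (x, y)) (weight p (x, y))%:C *: f (x, y).1
    = \sum_x (K * ((agree (Sl l (x0, y0)) x x0)%:R * p x))%:C *: f x.
  apply: eq_bigr => x _; rewrite -key rmorph_sum scaler_suml.
  by apply: eq_bigr.
rewrite -mulr_sumr.
have -> : \sum_x (agree (Sl l (x0, y0)) x x0)%:R * p x = PS p (Sl l (x0, y0)) x0.
  rewrite /PS [RHS]big_mkcond; apply: eq_bigr => x _.
  by case: (agree _ _ _); rewrite ?mul1r ?mul0r.
have Ppos : 0 < PS p (Sl l (x0, y0)) x0 := PS_pos p0 _ px0.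
rewrite /EX /condlaw scaler_sumr; apply: eq_bigr => x _.
rewrite scalerA -rmorphM; congr (_%:C *: _).
case: (agree _ _ _).
  by rewrite mul1r; field; rewrite !gt_eqF.
by rewrite mul0r !mulr0.
Qed.

End A.

Section F.
Variables (R : realType) (n d : nat) (p : cube n -> R) (f : cube n -> 'M[R[i]]_d).

Lemma ctrans_sumZ (T : finType) (c : T -> R) (M : T -> 'M[R[i]]_d) :
  ctrans (\sum_t (c t)%:C *: M t) = \sum_t (c t)%:C *: ctrans (M t).
Proof.
have cr : forall r : R, Num.conj (r%:C) = r%:C := fun r => conjc_real r.
apply/matrixP => i j; rewrite /ctrans !mxE !summxE rmorph_sum; apply: eq_bigr => t _.
set u := ((c t)%:C *: M t) j i; rewrite /u mxE [RHS]mxE !mxE rmorphM; congr (_ * _); exact: conjc_real.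
Qed.

Lemma ctransB (A B : 'M[R[i]]_d) : ctrans (A - B) = ctrans A - ctrans B.
Proof. by apply/matrixP => i j; rewrite /ctrans !mxE rmorphB. Qed.

Lemma herm_EX (S : {set 'I_n}) a : (forall x, hermitian_mx (f x)) ->
  hermitian_mx (EX p f S a).
Proof.
move=> H; rewrite /hermitian_mx /EX ctrans_sumZ; apply: eq_bigr => x _.
by rewrite H.
Qed.

Lemma finish (alpha : 'I_n -> R) (S' : {set 'I_n}) (i : 'I_n) (x0 : cube n) (a0 : R) :
  SCP p -> (forall x y, opnorm (f x - f y) <= dalpha alpha x y) ->
  (forall x, hermitian_mx (f x)) -> (forall m, 0 <= alpha m) -> (forall x, 0 <= p x) ->
  alpha i <= a0 -> (forall j, j \notin i |: S' -> alpha j <= a0) -> 0 < p x0 ->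
  loewner ((EX p f (i |: S') x0 - EX p f S' x0) *m (EX p f (i |: S') x0 - EX p f S' x0))
          ((4 * a0 ^+ 2)%:C)%:M.
Proof.
move=> scp lip herm a0' p0 ai aS px0.
have [c [q [c1 q0 q1 q2 qE]]] := stepB f p0 a0' scp ai aS px0.
apply: (decomp_bound (D := fun t => f t.1 - f t.2)) qE => //.
- by rewrite /hermitian_mx ctransB !herm_EX.
- by apply: le_trans ai; exact: a0'.
- by move=> t qt; apply: le_trans (lip _ _) (q2 t qt).
Qed.

End F.

Local Close Scope complex_scope.
Unset Implicit Arguments.
Set Strict Implicit.

Theorem lemma5p2 (R : realType) (n k d : nat) (alpha : 'I_n -> R)
  (f : cube n -> 'M[R[i]]_d) (p : cube n -> R) :
  (forall i, 0 <= alpha i) ->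
  (forall i j : 'I_n, (i <= j)%N -> alpha j <= alpha i) ->
  (forall x, hermitian_mx (f x)) ->
  (forall x y, opnorm (f x - f y) <= dalpha alpha x y) ->
  is_distr p -> homogeneous k p -> SCP p ->
  forall w : Omega n k, 0 < weight p w ->
    (forall i : 'I_n, (i < k)%N ->
       loewner (Nmart p f i.+1 w *m Nmart p f i.+1 w)
               ((4 * alpha i ^+ 2)%:C%C)%:M) /\
    (forall i : 'I_n, i.+1 = k -> forall l : nat, (k < l <= 2 * k)%N ->
       loewner (Nmart p f l w *m Nmart p f l w)
               ((4 * alpha i ^+ 2)%:C%C)%:M).
Proof.
move=> a0 amono herm lip [p0 _] hom scp w ww.
have px0 : 0 < p w.1.
  move: ww; rewrite /weight lt_def mulf_eq0 negb_or => /andP [/andP [h1 _] _].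
  by rewrite lt_def h1 p0.
have pos : 0 < \prod_(j : 'I_k) unif R (avail w.1 w.2 j) (w.2 j).
  move: ww; rewrite /weight lt_def mulf_eq0 negb_or => /andP [/andP [_ h2] _].
  by rewrite lt_def h2 prodr_ge0 // => j _; exact: unif_ge0.
have key : forall (l : nat) (i : 'I_n) (a : R), (l <= 2 * k)%N ->
    Sl l w = i |: Sl l.-1 w -> alpha i <= a ->
    (forall j, j \notin Sl l w -> alpha j <= a) ->
    loewner (Nmart p f l w *m Nmart p f l w) ((4 * a ^+ 2)%:C%C)%:M.
  move=> l i a l2k SE ai aS.
  rewrite /Nmart !(cexpE f p0 hom) //; last by apply: leq_trans l2k; exact: leq_pred.
  rewrite SE; apply: finish => //.
  by move=> j; rewrite -SE; exact: aS.
split.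
  move=> i ik; apply: key => //.
  - by move: ik; lia.
  - rewrite /Sl /=.
    have -> : (i.+1 - k)%N = 0%N by move: ik; lia.
    have -> : (i - k)%N = 0%N by move: ik; lia.
    rewrite Pset0 !setU0.
    have -> : minn i.+1 k = i.+1 by apply/minn_idPl.
    have -> : minn i k = i by apply/minn_idPl; exact: ltnW.
    by apply/setP => m; rewrite !inE ltnS leq_eqVlt.
  - move=> j; rewrite /Sl !inE negb_or => /andP [jl _].
    apply: amono; move: jl ik; rewrite -leqNgt; lia.
move=> i ik l /andP [kl l2k].
have j1k : ((l - k).-1 < k)%N by move: kl l2k; lia.
set j1 := Ordinal j1k.
have E1 : (l - k)%N = j1.+1 by rewrite /j1 /=; move: kl; lia.
have E2 : (l.-1 - k)%N = j1 by rewrite /j1 /=; move: kl; lia.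
have M1 : minn l k = k by apply/minn_idPr; exact: ltnW.
have M2 : minn l.-1 k = k by apply/minn_idPr; move: kl; lia.
have Sl1 : Sl l w = [set m : 'I_n | (m < k)%N] :|: (Pset w.2 j1 :|: [set m | w.2 j1 == Some m]).
  by rewrite /Sl M1 E1 Pset_S.
have Sl2 : Sl l.-1 w = [set m : 'I_n | (m < k)%N] :|: Pset w.2 j1.
  by rewrite /Sl M2 E2.
have aS : forall j, j \notin Sl l w -> alpha j <= alpha i.
  move=> j; rewrite Sl1 !inE negb_or => /andP [jl _].
  by apply: amono; move: jl ik; rewrite -leqNgt; lia.
case E: (w.2 j1) => [m|].
  apply: (key l m) => //.
  - rewrite Sl1 Sl2 E; apply/setP => m'; rewrite !inE /=.
    have -> : (Some m == Some m') = (m' == m) by apply/eqP/eqP => [[->]|->].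
    by case: (m' == m); case: (m' < k)%N; case: [exists _, _]; rewrite ?orbT.
  - apply: amono.
    have mP : m \in Pset w.2 (l - k).
      by rewrite E1 Pset_S !inE E eqxx orbT.
    have := Pset_Hi pos mP; rewrite inE => /andP [_ km].
    by move: km ik; lia.
apply: (key l i) => //.
rewrite Sl1 Sl2 E; apply/setP => m'; rewrite !inE /=.
case: (eqVneq m' i) => [->|_]; last by rewrite orbF.
have -> : (i < k)%N by rewrite -ik ltnSn.
by [].
Qed.
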